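(* Let $n\ge1$, let $G$ be a group and $H$ a subgroup of $G$ with $G=HZ_n(G)$. Then $(H,H)$ and $(H,G)$ are relatively $n$-isoclinic, and $(H,G)$ and $(G,G)$ are relatively $n$-isoclinic.
   Context: Commutators: $[x,y]=x^{-1}y^{-1}xy$, left-normed $[x_1,\dots,x_{m+1}]=[[x_1,\dots,x_m],x_{m+1}]$. $Z_n(G)$ is the $n$-th term of the upper central series. $[_nH,G]$ is the subgroup generated by all $[h_1,\dots,h_n,g]$, $h_i\in H$, $g\in G$. Relative $n$-isoclinism: for groups $G_1,G_2$ and subgroups $H_i\le G_i$, $(H_1,G_1)$ and $(H_2,G_2)$ are relatively $n$-isoclinic if there is a pair $(\alpha,\beta)$ such that: (i) $\alpha: G_1/Z_n(G_1)\to G_2/Z_n(G_2)$ is an isomorphism mapping $H_1Z_n(G_1)/Z_n(G_1)$ (identified with $H_1/(Z_n(G_1)\cap H_1)$) onto $H_2Z_n(G_2)/Z_n(G_2)$; (ii) $\beta:[_nH_1,G_1]\to[_nH_2,G_2]$ is an isomorphism; (iii) for all $h_1,\dots,h_n\in H_1$, $g\in G_1$: $\beta([h_1,\dots,h_n,g])=[k_1,\dots,k_n,g']$ whenever $k_i\in H_2$, $k_iZ_n(G_2)=\alpha(h_iZ_n(G_1))$ and $g'Z_n(G_2)=\alpha(gZ_n(G_1))$. *)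

(* Defs.v *)
From Stdlib Require Import Arith.

Set Implicit Arguments.

Record group := Group {
  car :> Type;
  gmul : car -> car -> car;
  ginv : car -> car;
  gone : car;
  gmulA : forall x y z, gmul x (gmul y z) = gmul (gmul x y) z;
  gmul1 : forall x, gmul x gone = x;
  g1mul : forall x, gmul gone x = x;
  gmulV : forall x, gmul x (ginv x) = gone;
  gVmul : forall x, gmul (ginv x) x = gone
}.

Arguments gmul {g}.
Arguments ginv {g}.
Arguments gone {g}.

Section Defs.
Variable T : group.

Definition is_subgroup (S : T -> Prop) : Prop :=
  S gone /\ (forall x y, S x -> S y -> S (gmul x y)) /\ (forall x, S x -> S (ginv x)).

Definition gen (S : T -> Prop) : T -> Prop :=
  fun x => forall K : T -> Prop, is_subgroup K -> (forall y, S y -> K y) -> K x.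

Definition comm (x y : T) : T := gmul (gmul (ginv x) (ginv y)) (gmul x y).

Fixpoint lcomm (h : nat -> T) (k : nat) : T :=
  match k with
  | 0 => h 0
  | S k' => comm (lcomm h k') (h (S k'))
  end.

(* [h 0, ..., h (n-1), g]  (meaningful for n >= 1) *)
Definition ncomm (n : nat) (h : nat -> T) (g : T) : T := comm (lcomm h (pred n)) g.

Fixpoint Zn (G : T -> Prop) (k : nat) : T -> Prop :=
  match k with
  | 0 => fun x => x = gone
  | S k' => fun x => G x /\ forall g, G g -> Zn G k' (comm x g)
  end.

Definition ncommg (n : nat) (H G : T -> Prop) : T -> Prop :=
  gen (fun x => exists (h : nat -> T) (g : T),
         (forall i, i < n -> H (h i)) /\ G g /\ x = ncomm n h g).
End Defs.

(* Relative n-isoclinism of (H1,G1) and (H2,G2).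
   The isomorphism alpha : G1/Z_n(G1) -> G2/Z_n(G2) is described through a map
   of representatives a : T1 -> T2, alpha(x Z_n(G1)) = a(x) Z_n(G2). *)
Definition rel_n_isoclinic (n : nat) (T1 T2 : group)
  (H1 G1 : T1 -> Prop) (H2 G2 : T2 -> Prop) : Prop :=
  let Z1 := @Zn T1 G1 n in
  let Z2 := @Zn T2 G2 n in
  let B1 := @ncommg T1 n H1 G1 in
  let B2 := @ncommg T2 n H2 G2 in
  exists (a : T1 -> T2) (b : T1 -> T2),
    (* (i) alpha is a well-defined isomorphism G1/Z1 -> G2/Z2 *)
    (forall x, G1 x -> G2 (a x)) /\
    (forall x y, G1 x -> G1 y -> Z1 (gmul (ginv x) y) -> Z2 (gmul (ginv (a x)) (a y))) /\
    (forall x y, G1 x -> G1 y -> Z2 (gmul (ginv (a (gmul x y))) (gmul (a x) (a y)))) /\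
    (forall x y, G1 x -> G1 y -> Z2 (gmul (ginv (a x)) (a y)) -> Z1 (gmul (ginv x) y)) /\
    (forall y, G2 y -> exists x, G1 x /\ Z2 (gmul (ginv (a x)) y)) /\
    (*     mapping H1 Z1/Z1 onto H2 Z2/Z2 *)
    (forall h, H1 h -> exists k, H2 k /\ Z2 (gmul (ginv (a h)) k)) /\
    (forall k, H2 k -> exists h, H1 h /\ Z2 (gmul (ginv (a h)) k)) /\
    (* (ii) beta : [_n H1, G1] -> [_n H2, G2] is an isomorphism *)
    (forall x, B1 x -> B2 (b x)) /\
    (forall x y, B1 x -> B1 y -> b (gmul x y) = gmul (b x) (b y)) /\
    (forall x y, B1 x -> B1 y -> b x = b y -> x = y) /\
    (forall y, B2 y -> exists x, B1 x /\ b x = y) /\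
    (* (iii) compatibility *)
    (forall (h : nat -> T1) (g : T1) (k : nat -> T2) (g' : T2),
        (forall i, i < n -> H1 (h i)) -> G1 g ->
        (forall i, i < n -> H2 (k i)) -> G2 g' ->
        (forall i, i < n -> Z2 (gmul (ginv (a (h i))) (k i))) ->
        Z2 (gmul (ginv (a g)) g') ->
        b (@ncomm T1 n h g) = @ncomm T2 n k g').

(* Main.v *)
Require Import Defs.
From Stdlib Require Import Arith Lia IndefiniteDescription Classical.

Section G.
Variable T : group.
Implicit Types x y z w : T.
Local Notation "x * y" := (@gmul T x y).
Local Notation "x ^-1" := (@ginv T x) (at level 3).
Local Notation one := (@gone T).
Definition cj x y := y^-1 * (x * y).

Lemma mulA' x y z : (x * y) * z = x * (y * z). Proof. now rewrite gmulA. Qed.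
Lemma mulKV x y : x * (x^-1 * y) = y. Proof. now rewrite gmulA, gmulV, g1mul. Qed.
Lemma mulVK x y : x^-1 * (x * y) = y. Proof. now rewrite gmulA, gVmul, g1mul. Qed.
Lemma inv_unique x y : x * y = one -> y = x^-1.
Proof. intro h. rewrite <- (g1mul _ y), <- (gVmul _ x), <- gmulA, h, gmul1. reflexivity. Qed.
Lemma ginv_mul x y : (x * y)^-1 = y^-1 * x^-1.
Proof. symmetry; apply inv_unique. rewrite mulA', mulKV. apply gmulV. Qed.
Lemma ginv_inv x : (x^-1)^-1 = x.
Proof. symmetry; apply inv_unique. apply gVmul. Qed.
Lemma ginv_one : one^-1 = one.
Proof. symmetry; apply inv_unique. apply g1mul. Qed.
End G.

Create HintDb grp.
#[export] Hint Rewrite mulA' mulKV mulVK ginv_mul ginv_inv ginv_one gmulV gVmul gmul1 g1mul : grp.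
Ltac gnorm := unfold comm, cj in *; autorewrite with grp; try reflexivity.


Section Main.
Variable T : group.
Local Notation "x * y" := (@gmul T x y).
Local Notation "x ^-1" := (@ginv T x) (at level 3).
Local Notation one := (@gone T).
Local Notation cm := (comm T).
Local Notation Z := (Zn T).

Lemma sg_comm (S : T -> Prop) x y : is_subgroup T S -> S x -> S y -> S (cm x y).
Proof. intros [h1 [hm hi]] a b. unfold comm. auto. Qed.
Lemma sg_cj (S : T -> Prop) x y : is_subgroup T S -> S x -> S y -> S (cj T x y).
Proof. intros [h1 [hm hi]] a b. unfold cj. auto. Qed.

Lemma hwid (x y z : T) : comm T (comm T x y) z =
  cj T (ginv (gmul (cj T (comm T (comm T (ginv y) (ginv z)) x) z) (cj T (comm T (comm T z (ginv x)) (ginv y)) x))) y.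
Proof. gnorm. Qed.

Section Sub.
Variable Q : T -> Prop.
Hypothesis hS : is_subgroup T Q.

Lemma Z_props k :
  Z Q k one /\ (forall x y, Z Q k x -> Z Q k y -> Z Q k (x * y)) /\
  (forall x, Z Q k x -> Z Q k (x^-1)) /\
  (forall w h, Z Q k w -> Q h -> Z Q k (cj T w h)) /\
  (forall x, Z Q k x -> Q x).
Proof.
  destruct hS as [s1 [sm si]].
  induction k as [|k [a [b [c [d e]]]]]; simpl.
  - repeat split.
    + intros x y -> ->. apply g1mul.
    + intros x ->. apply ginv_one.
    + intros w h -> _. unfold cj. rewrite g1mul. apply gVmul.
    + intros x ->. exact s1.
  - split; [|split; [|split; [|split]]].
    + split; [exact s1|]. intros g _. replace (cm one g) with one by (gnorm). exact a.
    + intros x y [hx fx] [hy fy]. split; auto. intros g hg.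
      replace (cm (x*y) g) with (cj T (cm x g) y * cm y g) by gnorm. auto.
    + intros x [hx fx]. split; auto. intros g hg.
      replace (cm (x^-1) g) with (cj T ((cm x g)^-1) (x^-1)) by gnorm. auto.
    + intros w h [hw fw] hh. split; [unfold cj; auto|]. intros g hg.
      replace (cm (cj T w h) g) with (cj T (cm w (cj T g (h^-1))) h) by gnorm.
      apply d; [apply fw; unfold cj; auto | exact hh].
    + intros x [hx _]; exact hx.
Qed.

Lemma Z1 k : Z Q k one. Proof. apply Z_props. Qed.
Lemma Zmul k x y : Z Q k x -> Z Q k y -> Z Q k (x * y). Proof. apply Z_props. Qed.
Lemma Zinv k x : Z Q k x -> Z Q k (x^-1). Proof. apply Z_props. Qed.
Lemma Zcj k w h : Z Q k w -> Q h -> Z Q k (cj T w h). Proof. apply Z_props. Qed.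
Lemma ZS k x : Z Q k x -> Q x. Proof. apply Z_props. Qed.
Lemma Zcl k x g : Z Q (S k) x -> Q g -> Z Q k (cm x g). Proof. intros [_ f] h; auto. Qed.
Lemma Zcr k x g : Z Q (S k) x -> Q g -> Z Q k (cm g x).
Proof. intros hx hg. replace (cm g x) with ((cm x g)^-1) by gnorm. apply Zinv, Zcl; auto. Qed.
Lemma Zup k x : Z Q k x -> Z Q (S k) x.
Proof.
  revert x; induction k as [|k IH]; intros x hx.
  - simpl in hx; subst. apply (Z1 1).
  - destruct hx as [hx f]. split; auto.
Qed.
Lemma Zup' k j x : Z Q k x -> Z Q (j + k) x.
Proof. intro h; induction j; simpl; [exact h| apply Zup; exact IHj]. Qed.

Definition PP k d := Q d /\ forall m z, Z Q (k + m) z -> Z Q m (cm d z).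

Lemma PP_inv k d : PP k d -> PP k (d^-1).
Proof.
  intros [hd f]. split. { apply hS; auto. }
  intros m z hz. replace (cm (d^-1) z) with (cj T ((cm d z)^-1) (d^-1)) by gnorm.
  apply Zcj. apply Zinv; auto. apply hS; auto.
Qed.

Lemma PP1 x : Q x -> PP 1 x.
Proof. intros hx; split; auto. intros m z hz. apply Zcr; auto. Qed.

Lemma PP_down k d : PP (S k) d -> PP k d.
Proof. intros [hd f]; split; auto. intros m z hz. apply f. apply Zup. exact hz. Qed.

Lemma PP_comm k d y : PP k d -> Q y -> PP (S k) (cm d y).
Proof.
  intros Pd hy. pose proof (PP_inv _ _ Pd) as Pdi. destruct Pd as [hd f]. destruct Pdi as [hdi fi].
  destruct hS as [s1 [sm si]].
  split. { apply sg_comm; auto. }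
  intros m z hz. simpl in hz. rewrite hwid.
  apply Zcj; auto. apply Zinv. apply Zmul.
  - apply Zcj; [| apply ZS with (S (k+m)); auto].
    replace (cm (cm (y^-1) (z^-1)) d) with ((cm d (cm (y^-1) (z^-1)))^-1) by gnorm.
    apply Zinv. apply f. apply Zcr; auto. apply Zinv. exact hz.
  - apply Zcj; auto. apply Zcl; auto.
    replace (cm z (d^-1)) with ((cm (d^-1) z)^-1) by gnorm.
    apply Zinv. apply fi. replace (k + S m) with (S (k+m)) by lia. exact hz.
Qed.

Lemma PP_lcomm j f : (forall i, i <= j -> Q (f i)) -> PP (S j) (lcomm T f j).
Proof.
  induction j as [|j IH]; intros hf; simpl.
  - apply PP1, hf; lia.
  - apply PP_comm. apply IH; intros; apply hf; lia. apply hf; lia.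
Qed.

Lemma E j : forall k f f', (forall i, i <= j -> Q (f i) /\ Q (f' i) /\ Z Q (j + k) ((f i)^-1 * f' i)) ->
  Z Q k ((lcomm T f j)^-1 * lcomm T f' j).
Proof.
  destruct hS as [s1 [sm si]].
  induction j as [|j IH]; intros k f f' hf.
  - simpl. apply hf. lia.
  - simpl.
    assert (IHc : Z Q (S k) ((lcomm T f j)^-1 * lcomm T f' j)).
    { apply IH. intros i hi. destruct (hf i ltac:(lia)) as [a [b c]]. repeat split; auto.
      replace (j + S k) with (S j + k) by lia. exact c. }
    assert (Pc : PP (S j) (lcomm T f j)) by (apply PP_lcomm; intros; apply hf; lia).
    assert (Pc' : PP (S j) (lcomm T f' j)) by (apply PP_lcomm; intros; apply hf; lia).
    assert (Pcy : PP (S j) (cm (lcomm T f j) (f (S j)))).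
    { apply PP_down. apply PP_comm; auto. apply hf; lia. }
    destruct (hf (S j) (le_n _)) as [hy [hy' hz]].
    set (c := lcomm T f j) in *. set (c' := lcomm T f' j) in *.
    set (y := f (S j)) in *. set (y' := f' (S j)) in *.
    set (w := c^-1 * c') in *. set (z := y^-1 * y') in *.
    assert (hc : Q c) by apply Pc. assert (hc' : Q c') by apply Pc'.
    assert (e : (cm c y)^-1 * cm c' y' =
       cj T (cj T (cm c z) w * cm w z) (cm c y) * (cm (cm c y) (w * z) * cj T (cm w y) z)).
    { subst w z. gnorm. }
    rewrite e. clear e.
    assert (hw : Q w) by (subst w; auto). assert (hzS : Q z) by (subst z; auto).
    assert (hwz : Z Q (S j + k) (w * z)).
    { apply Zmul; [|exact hz]. pose proof (Zup' _ j _ IHc) as h. replace (S j + k) with (j + S k) by lia. exact h. }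
    apply Zmul.
    + apply Zcj; [|apply sg_comm; auto]. apply Zmul.
      * apply Zcj; [|exact hw]. apply (proj2 Pc). exact hz.
      * apply Zcl; auto.
    + apply Zmul.
      * apply (proj2 Pcy). exact hwz.
      * apply Zcj; [|exact hzS]. apply Zcl; auto.
Qed.
End Sub.
Lemma lcomm_ext j : forall f f', (forall i, i <= j -> f i = f' i) -> lcomm T f j = lcomm T f' j.
Proof.
  induction j as [|j IH]; intros f f' h; simpl.
  - apply h; lia.
  - rewrite (IH f f') by (intros; apply h; lia). rewrite h by lia. reflexivity.
Qed.

Lemma lcomm_shift j : forall h, lcomm T h (S j) =
  lcomm T (fun i => match i with 0 => cm (h 0) (h 1) | S i' => h (S (S i')) end) j.
Proof.
  induction j as [|j IH]; intros h.
  - reflexivity.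
  - change (lcomm T h (S (S j))) with (cm (lcomm T h (S j)) (h (S (S j)))).
    rewrite IH. reflexivity.
Qed.

Lemma eq_of_inv x y : x^-1 * y = one -> x = y.
Proof. intro e. rewrite <- (mulKV _ x y), e, gmul1. reflexivity. Qed.

Section Sub2.
Variable Q : T -> Prop.
Hypothesis hS : is_subgroup T Q.

Lemma Zchar1 j : forall x, Z Q j x -> forall h, h 0 = x -> (forall i, 0 < i <= j -> Q (h i)) -> lcomm T h j = one.
Proof.
  induction j as [|j IH]; intros x hx h h0 hh.
  - simpl in *. congruence.
  - rewrite lcomm_shift. apply (IH (cm x (h 1))).
    + apply Zcl; auto. apply hh; lia.
    + rewrite h0; reflexivity.
    + intros i hi. destruct i; [lia|]. apply hh; lia.
Qed.

Lemma Zchar2 j : forall x, Q x -> (forall h, h 0 = x -> (forall i, 0 < i <= j -> Q (h i)) -> lcomm T h j = one) -> Z Q j x.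
Proof.
  induction j as [|j IH]; intros x hx H.
  - simpl. apply (H (fun _ => x)); [reflexivity| intros; lia].
  - split; auto. intros g hg. apply IH. { apply sg_comm; auto. }
    intros f f0 hf.
    set (h := fun i => match i with 0 => x | 1 => g | S (S i') => f (S i') end).
    rewrite <- (H h); [|reflexivity|].
    + rewrite lcomm_shift. apply lcomm_ext. intros [|i] _; simpl; auto.
    + intros [|[|i]] hi; simpl; [lia|exact hg|]. apply hf; lia.
Qed.

Lemma Einv j f f' : (forall i, i <= j -> Q (f i) /\ Q (f' i) /\ Z Q j ((f i)^-1 * f' i)) ->
  lcomm T f j = lcomm T f' j.
Proof.
  intro h. apply eq_of_inv. apply (E Q hS j 0). intros i hi. rewrite Nat.add_0_r. auto.
Qed.

Lemma NC n h k g g' : 1 <= n ->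
  (forall i, i < n -> Q (h i) /\ Q (k i) /\ Z Q n ((h i)^-1 * k i)) ->
  Q g -> Q g' -> Z Q n (g^-1 * g') -> ncomm T n h g = ncomm T n k g'.
Proof.
  intros hn hh hg hg' hz. destruct n as [|n]; [lia|]. unfold ncomm. simpl pred.
  set (f := fun i => if i <=? n then h i else g).
  set (f' := fun i => if i <=? n then k i else g').
  transitivity (lcomm T f (S n)).
  - simpl. f_equal. apply lcomm_ext. intros i hi. unfold f. rewrite (proj2 (Nat.leb_le i n) hi). reflexivity.
    unfold f. rewrite (proj2 (Nat.leb_nle (S n) n) ltac:(lia)). reflexivity.
  - transitivity (lcomm T f' (S n)).
    + apply Einv. intros i hi. unfold f, f'. destruct (Nat.leb_spec i n).
      * apply hh; lia.
      * auto.
    + simpl. f_equal. apply lcomm_ext. intros i hi. unfold f'. rewrite (proj2 (Nat.leb_le i n) hi). reflexivity.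
      unfold f'. rewrite (proj2 (Nat.leb_nle (S n) n) ltac:(lia)). reflexivity.
Qed.
End Sub2.

Lemma Zrestr (G H : T -> Prop) : is_subgroup T H -> (forall x, H x -> G x) ->
  forall k u, Z G k u -> H u -> Z H k u.
Proof.
  intros hH sub k. induction k as [|k IH]; intros u hu h; simpl in *; auto.
  destruct hu as [_ f]. split; auto. intros g hg. apply IH; auto. apply sg_comm; auto.
Qed.

Lemma gen_mono (S1 S2 : T -> Prop) : (forall y, S1 y -> gen T S2 y) -> forall x, gen T S1 x -> gen T S2 x.
Proof. intros h x hx K hK hS2. apply hx; auto. intros y hy. apply (h y hy K hK hS2). Qed.

Lemma gen_in (S1 : T -> Prop) x : S1 x -> gen T S1 x.
Proof. intros h K _ hK. auto. Qed.

End Main.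

Theorem lemma2p3 (n : nat) (T : group) (G H : T -> Prop) :
  1 <= n ->
  is_subgroup T G -> is_subgroup T H -> (forall x, H x -> G x) ->
  (forall g, G g -> exists h z, H h /\ Zn T G n z /\ g = gmul h z) ->
  rel_n_isoclinic n T T H H H G /\ rel_n_isoclinic n T T H G G G.
Proof.
  intros hn hG hH HG dec.
  assert (z1 : Zn T G n gone) by apply (Z1 T G hG).
  assert (zV : forall x : T, Zn T G n (gmul (ginv x) x)) by (intro; rewrite gVmul; exact z1).
  assert (dec' : forall y, G y -> exists h, H h /\ Zn T G n (gmul (ginv h) y)).
  { intros y hy. destruct (dec y hy) as [h [z [a [b ->]]]]. exists h. rewrite mulVK. auto. }
  assert (seq : forall (f : nat -> T) (P : nat -> Prop), (forall i, P i -> G (f i)) ->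
             exists h, forall i, P i -> H (h i) /\ Zn T G n (gmul (ginv (h i)) (f i))).
  { intros f P hf. apply (functional_choice (fun i h => P i -> H h /\ Zn T G n (gmul (ginv h) (f i)))). intro i.
    destruct (classic (P i)) as [p|p].
    - destruct (dec' _ (hf i p)) as [h hh]. exists h. auto.
    - exists gone. intro; contradiction. }
  assert (NCG : forall h k g g', (forall i, i < n -> G (h i) /\ G (k i) /\ Zn T G n (gmul (ginv (h i)) (k i))) ->
     G g -> G g' -> Zn T G n (gmul (ginv g) g') -> ncomm T n h g = ncomm T n k g').
  { intros. apply (NC T G hG); auto. }
  assert (hsub := Zrestr T G H hH HG).
  assert (ZHG : forall u, Zn T H n u -> Zn T G n u).
  { intros u hu. assert (Hu : H u) by exact (ZS T H hH n u hu).
    apply (Zchar2 T G hG); auto. intros f f0 hf.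
    destruct (seq f (fun i => 0 < i <= n) hf) as [h hh].
    set (h' := fun i => match i with 0 => u | S i' => h (S i') end).
    transitivity (lcomm T h' n).
    - symmetry. apply (Einv T G hG). intros [|i] hi; simpl.
      + rewrite f0. repeat split; auto. 
      + destruct (hh (S i) ltac:(lia)). repeat split; auto. apply hf; lia.
    - apply (Zchar1 T H n u hu); [reflexivity|]. intros [|i] hi; [lia|]. apply hh; lia. }
  assert (gen_eq : forall (S1 S2 : T -> Prop), (forall y, S1 y -> S2 y) -> (forall y, S2 y -> S1 y) ->
     forall x, gen T S1 x <-> gen T S2 x).
  { intros S1 S2 a b x. split; apply gen_mono; intros y hy; apply gen_in; auto. }
  split.
  -
    assert (BB : forall x, ncommg T n H H x <-> ncommg T n H G x).
    { apply gen_eq.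
      - intros y [h [g [a [b c]]]]. exists h, g. auto.
      - intros y [h [g [a [b ->]]]]. destruct (dec' g b) as [h0 [hh0 hz]].
        exists h, h0. split; [auto|split; [auto|]]. symmetry. apply NCG; auto; intros i hi; repeat split; auto. }
    exists (fun x => x), (fun x => x). cbv zeta.
    repeat split; auto.
    + intros x y hx hy hz. apply hsub; auto. apply hH; auto. apply hH; auto.
    + intros h hh. exists h. auto.
    + intros x hx. exact (proj1 (BB x) hx).
    + intros y hy. exists y. split; auto. exact (proj2 (BB y) hy).
    + intros h g k g' hh hg hk hg' hi hz. apply NCG; auto; intros i hi'; repeat split; auto.
  -
    assert (BB : forall x, ncommg T n H G x <-> ncommg T n G G x).
    { apply gen_eq.
      - intros y [h [g [a [b c]]]]. exists h, g. auto.
      - intros y [k [g [a [b ->]]]].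
        destruct (seq k (fun i => i < n) a) as [h hh].
        exists h, g. split; [intros i hi; apply hh; auto| split; [auto|]].
        symmetry. apply NCG; auto; intros i hi; destruct (hh i hi); repeat split; auto. }
    exists (fun x => x), (fun x => x). cbv zeta.
    repeat split; auto.
    + intros y hy. exists y. auto.
    + intros h hh. exists h. auto.
    + intros x hx. exact (proj1 (BB x) hx).
    + intros y hy. exists y. split; auto. exact (proj2 (BB y) hy).
Qed.
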